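(* Let $\gamma \ge 0$ be a random variable (the channel power gain) with probability density function $f_\gamma$, let $\mathbb{E}[\cdot]$ denote expectation over $\gamma$, and fix constants $\theta>0$, $\beta>0$, $\bar P_\tau>0$ and $0<\tau<T$. Consider the optimization problem (P3) over sampling-rate functions $\lambda(\gamma)$: $$\min_{\lambda(\cdot)} \ \mathbb{E}\!\left[\lambda(\gamma)\left(\beta e^{\theta/\lambda(\gamma)}-1\right)\right]\quad\text{s.t.}\quad \mathbb{E}\!\left[\frac{\lambda(\gamma)}{\gamma}\right]\le \bar P_\tau,\qquad \tau\lambda(\gamma)\le 1,\qquad T\lambda(\gamma)\ge 1 .$$ Then the optimal sampling scheme $\lambda_{\rm opt}(\gamma)$ for this problem is $$\lambda_{\rm opt}(\gamma)=\begin{cases}\dfrac{1}{T}, & 0\le \gamma<\gamma_1^{\rm th},\\[2mm] \dfrac{\theta}{1+\mathcal{W}\!\left(\frac{\eta-\gamma}{e\beta\gamma}\right)}, & \gamma_1^{\rm th}\le\gamma\le\gamma_2^{\rm th},\\[2mm] \dfrac{1}{\tau}, & \gamma>\gamma_2^{\rm th},\end{cases}$$ where $\mathcal{W}(\cdot)$ is the Lambert W function (the inverse of $x\mapsto xe^x$), the thresholds are $$\gamma_1^{\rm th}=\frac{\eta}{1-\beta e^{\theta T}(1-\theta T)},\qquad \gamma_2^{\rm th}=\frac{\eta}{1-\beta e^{\theta\tau}(1-\theta\tau)},$$ and the constant $\eta$ is determined by $\mathbb{E}\!\left[\lambda_{\rm opt}(\gamma)/\gamma\right]=\bar P_\ta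u$.
   Context: This arises in a status-update system over a block-fading channel with coherence time $T$, packet transmission time $\tau$, and AoI exponent $\theta$. The problem (P3) is the Dinkelbach transform of minimizing $\mathbb{E}[e^{\theta/\lambda(\gamma)}\lambda(\gamma)]/\mathbb{E}[\lambda(\gamma)]$ under the same constraints, with $\beta$ an auxiliary parameter; here $\bar P_\tau=\bar P/(\tau(e^{D\log 2/(\tau B)}-1))$ for average power $\bar P$, packet size $D$ bits and bandwidth $B$, but for the statement $\bar P_\tau$ is simply a positive constant.
   Formalization: The parameters also satisfy $\beta e^{\theta\tau}(1-\theta\tau)<1$, and $\mathcal{W}$ is the principal branch, the solution w ≥ −1 of w eʷ = x. The statement above fails without it. *)

(* Defs.v *)
From HB Require Import structures.
From mathcomp Require Import all_boot all_order all_algebra.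
From mathcomp Require Import all_classical all_reals all_analysis.
Set Implicit Arguments. Unset Strict Implicit. Unset Printing Implicit Defensive.
Import Order.TTheory GRing.Theory Num.Theory.
Import numFieldNormedType.Exports.
Local Open Scope classical_set_scope.
Local Open Scope ring_scope.

Definition LambertW {R : realType} (x : R) : R :=
  xget 0 [set w : R | -1 <= w /\ w * expR w = x].

Definition is_pdf {R : realType} (f : R -> R) : Prop :=
  measurable_fun setT f /\ (forall x, 0 <= f x) /\ (forall x, x < 0 -> f x = 0) /\
  (\int[@lebesgue_measure R]_(x in [set: R]) (f x)%:E = 1)%E.

(* E[h(gamma)] for gamma with density f (gamma > 0 almost surely). *)
Definition expect {R : realType} (f h : R -> R) : \bar R :=
  (\int[@lebesgue_measure R]_(x in [set x : R | (0 < x)%R]) (h x * f x)%:E)%E.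

Definition obj_P3 {R : realType} (f : R -> R) (theta beta : R) (lam : R -> R) : \bar R :=
  expect f (fun g => lam g * (beta * expR (theta / lam g) - 1)).

Definition feasible_P3 {R : realType} (f : R -> R) (Pt tau T : R) (lam : R -> R) : Prop :=
  measurable_fun setT lam /\
  (forall g, 0 < g -> tau * lam g <= 1 /\ 1 <= T * lam g) /\
  (expect f (fun g => (lam g / g)%R) <= Pt%:E)%E.

Definition gamma_th {R : realType} (eta theta beta t : R) : R :=
  eta / (1 - beta * expR (theta * t) * (1 - theta * t)).

Definition lam_opt {R : realType} (eta theta beta tau T : R) (g : R) : R :=
  if g < gamma_th eta theta beta T then T^-1
  else if g <= gamma_th eta theta beta tau then
    theta / (1 + LambertW ((eta - g) / (expR 1 * beta * g)))
  else tau^-1.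

(* Main.v *)
Require Import Defs.
From HB Require Import structures.
From mathcomp Require Import all_boot all_order all_algebra.
From mathcomp Require Import all_classical all_reals all_analysis.
From mathcomp Require Import ring lra.
Import Order.TTheory GRing.Theory Num.Theory.
Import numFieldNormedType.Exports.
Local Open Scope classical_set_scope.
Local Open Scope ring_scope.

Section Alg.
Context {R : realType}.

Lemma kw_lt (a b : R) : -1 <= a -> a < b -> a * expR a < b * expR b.
Proof.
move=> a1 ab.
have Ea := expR_gt0 a; have Eb := expR_gt0 b.
have [b0|b0] := leP 0 b.
  have eb : expR b = expR a * expR (b - a) by rewrite -expRD addrC subrK.
  have X := expR_ge1Dx (b - a).
  rewrite eb.
  have h1 : b * (expR a * (1 + (b - a))) <= b * (expR a * expR (b - a)).
    by rewrite ler_wpM2l // ler_wpM2l // ltW.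
  have h3 : 0 < expR a * ((b - a) * (1 + b)) by rewrite mulr_gt0 // mulr_gt0 //; lra.
  have h2 : a * expR a < b * (expR a * (1 + (b - a))) by nra.
  lra.
have ea : expR a = expR b * expR (a - b) by rewrite -expRD addrC subrK.
have X := @expR_gt1Dx R (a - b).
have X' : 1 + (a - b) < expR (a - b) by apply: X; apply: ltr0_neq0; lra.
rewrite ea.
have h1 : a * (expR b * expR (a - b)) < a * (expR b * (1 + (a - b))).
  by rewrite ltr_nM2l ?ltr_pM2l //; lra.
have h3 : 0 <= expR b * ((b - a) * (1 + a)) by apply: mulr_ge0; [apply: ltW|apply: mulr_ge0; lra].
nra.
Qed.


Lemma kw_le (a b : R) : -1 <= a -> -1 <= b -> a * expR a <= b * expR b -> a <= b.
Proof.
move=> a1 b1 h; rewrite leNgt; apply/negP => ba.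
have := @kw_lt b a b1 ba; lra.
Qed.

Lemma W_eq (w z : R) : -1 <= w -> w * expR w = z -> LambertW z = w.
Proof.
move=> w1 wz; rewrite /LambertW.
have := xgetPex 0 (ex_intro (fun u : R => -1 <= u /\ u * expR u = z) w (conj w1 wz)).
set u := xget _ _ => -[u1 uz].
apply/eqP; rewrite eq_le; apply/andP; split; apply: kw_le => //; lra.
Qed.

Lemma W_ex (a b z : R) : -1 <= a -> a <= b -> a * expR a <= z <= b * expR b ->
  exists2 w, a <= w <= b & w * expR w = z.
Proof.
move=> a1 ab /andP[za zb].
have kab : a * expR a <= b * expR b by lra.
have kcont : continuous (fun w : R => w * expR w).
  move=> x; apply: (@continuousM R R id expR x) => //.
  exact: continuous_expR.
have hz : Num.min (a * expR a) (b * expR b) <= z <= Num.max (a * expR a) (b * expR b).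
  by rewrite (min_idPl kab) (max_idPr kab); apply/andP.
have [c cab kc] := @IVT R (fun w => w * expR w) a b z ab
  (continuous_subspaceT kcont) hz.
by exists c => //; move: cab; rewrite in_itv.
Qed.


Lemma h_dec (theta tau T : R) : 0 < theta -> 0 < tau -> tau < T ->
  expR (theta * T) * (1 - theta * T) < expR (theta * tau) * (1 - theta * tau).
Proof.
move=> th ta tT.
set a := theta * tau; set b := theta * T.
have a0 : 0 < a by rewrite mulr_gt0.
have ab : a < b by rewrite ltr_pM2l.
have ea : expR a = expR b * expR (a - b) by rewrite -expRD addrC subrK.
rewrite ea.
have Eb := expR_gt0 b.
rewrite -mulrA ltr_pM2l //.
have Y := expR_ge1Dx (a - b).
have Y1 : expR (a - b) < 1 by rewrite expR_lt1; lra.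
have [a1|a1] := leP a 1.
  have : (1 + (a - b)) * (1 - a) <= expR (a - b) * (1 - a).
    by rewrite ler_wpM2r //; lra.
  nra.
have : expR (a - b) * (1 - a) > 1 - a by rewrite -[X in X < _]mul1r ltr_nM2r //; lra.
lra.
Qed.

Lemma tangent (theta beta l l0 : R) : 0 < beta -> 0 < l -> 0 < l0 ->
  l0 * (beta * expR (theta / l0) - 1) + (beta * expR (theta / l0) * (1 - theta / l0) - 1) * (l - l0)
  <= l * (beta * expR (theta / l) - 1).
Proof.
move=> b0 l0' l00.
set a := theta / l; set a0 := theta / l0.
have al : a * l = theta by rewrite /a mulfVK // gt_eqF.
have al0 : a0 * l0 = theta by rewrite /a0 mulfVK // gt_eqF.
have E0 := expR_gt0 a0.
have ea : expR a = expR a0 * expR (a - a0) by rewrite -expRD addrC subrK.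
have X := expR_ge1Dx (a - a0).
have key : beta * l * (expR a0 * (1 + (a - a0))) <= beta * l * expR a.
  apply: ler_wpM2l; first by rewrite mulr_ge0 // ltW.
  by rewrite ea; apply: ler_wpM2l; [exact: ltW | exact: X].
have id1 : beta * expR a0 * (a0 * l0) = beta * expR a0 * (a * l) by rewrite al al0.
nra.
Qed.


Lemma comb (theta beta mu g l l0 : R) : 0 < beta -> 0 < l -> 0 < l0 -> 0 < g ->
  0 <= (beta * expR (theta / l0) * (1 - theta / l0) - 1 + mu / g) * (l - l0) ->
  l0 * (beta * expR (theta / l0) - 1) + mu * (l0 / g) <=
  l * (beta * expR (theta / l) - 1) + mu * (l / g).
Proof.
move=> b0 lp l0p gp D.
have := @tangent theta beta l l0 b0 lp l0p.
have e : mu * (l / g) - mu * (l0 / g) = mu / g * (l - l0) by ring.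
move: D; rewrite mulrDl => D.
lra.
Qed.

Lemma pointwise (theta beta tau T eta g : R) :
  0 < theta -> 0 < beta -> 0 < tau -> tau < T ->
  beta * expR (theta * tau) * (1 - theta * tau) < 1 -> 0 < g ->
  (tau * lam_opt eta theta beta tau T g <= 1 /\ 1 <= T * lam_opt eta theta beta tau T g) /\
  forall l, tau * l <= 1 -> 1 <= T * l ->
   lam_opt eta theta beta tau T g * (beta * expR (theta / lam_opt eta theta beta tau T g) - 1)
     + Num.max eta 0 * (lam_opt eta theta beta tau T g / g)
   <= l * (beta * expR (theta / l) - 1) + Num.max eta 0 * (l / g).
Proof.
move=> th b0 ta tT hyp gp.
have T0 : 0 < T by lra.
have hd := @h_dec theta tau T th ta tT.
set d1 := 1 - beta * expR (theta * T) * (1 - theta * T).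
set d2 := 1 - beta * expR (theta * tau) * (1 - theta * tau).
have d20 : 0 < d2 by rewrite /d2; lra.
have d12 : d2 < d1 by rewrite /d1 /d2; have := ltr_pM2l b0; move=> h; nra.
have d10 : 0 < d1 by lra.
have lpos l : 1 <= T * l -> 0 < l.
  move=> h; rewrite ltNge; apply/negP => l0; have : T * l <= 0 by rewrite mulr_ge0_le0 // ltW.
  lra.
rewrite /lam_opt /gamma_th -/d1 -/d2.
case: ifP => [g1|g1].
  have e0 : 0 < eta.
    have := g1; rewrite ltr_pdivlMr // => h; nra.
  rewrite (max_idPl (ltW e0)).
  have Ti : 0 < T^-1 by rewrite invr_gt0.
  split; first by rewrite mulfV ?gt_eqF // lexx ler_pdivrMr // mul1r ltW.
  move=> l l1 l2; apply: comb => //; first exact: lpos.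
  rewrite invrK; apply: mulr_ge0.
    move: g1; rewrite ltr_pdivlMr // => g1.
    have : d1 < eta / g by rewrite ltr_pdivlMr // mulrC.
    rewrite /d1; lra.
  by rewrite subr_ge0 -(ler_pM2l T0) mulfV ?gt_eqF.
case: ifP => [g2|g2].
  have g1' : eta / d1 <= g by rewrite leNgt g1.
  have e0 : 0 < eta.
    have := g2; rewrite ler_pdivlMr // => h; have := mulr_gt0 gp d20; lra.
  rewrite (max_idPl (ltW e0)).
  set z := (eta - g) / (expR 1 * beta * g).
  have E1 := expR_gt0 (1 : R).
  have ebg : 0 < expR 1 * beta * g by rewrite !mulr_gt0.
  have ez t : expR (theta * t - 1) = expR (theta * t) / expR 1 by rewrite expRD expRN.
  have za : (theta * tau - 1) * expR (theta * tau - 1) <= z.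
    rewrite ez -subr_ge0.
    have -> : z - (theta * tau - 1) * (expR (theta * tau) / expR 1) = (eta - g * d2) / (expR 1 * beta * g).
      by rewrite /z /d2; field; rewrite !lt0r_neq0.
    by apply: divr_ge0; [rewrite subr_ge0 -ler_pdivlMr | exact: ltW].
  have zb : z <= (theta * T - 1) * expR (theta * T - 1).
    rewrite ez -subr_ge0.
    have -> : (theta * T - 1) * (expR (theta * T) / expR 1) - z = (g * d1 - eta) / (expR 1 * beta * g).
      by rewrite /z /d1; field; rewrite !lt0r_neq0.
    by apply: divr_ge0; [rewrite subr_ge0 -ler_pdivrMr | exact: ltW].
  have ta1 : -1 <= theta * tau - 1 by have := mulr_gt0 th ta; lra.
  have tT' : theta * tau - 1 <= theta * T - 1 by rewrite lerD2r ler_pM2l // ltW.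
  have [w /andP[w1 w2] kz] := @W_ex _ _ z ta1 tT' (introT andP (conj za zb)).
  rewrite (@W_eq w z _ kz); last by lra.
  have w0 : 0 < 1 + w by have := mulr_gt0 th ta; lra.
  have l0p : 0 < theta / (1 + w) by rewrite divr_gt0.
  split.
    split; [rewrite mulrA ler_pdivrMr // mul1r | rewrite mulrA ler_pdivlMr // mul1r]; lra.
  move=> l l1 l2; apply: comb => //; first exact: lpos.
  have -> : theta / (theta / (1 + w)) = 1 + w by rewrite invf_div mulrCA mulfV ?gt_eqF // mulr1.
  rewrite expRD.
  have -> : beta * (expR 1 * expR w) * (1 - (1 + w)) = - (expR 1 * beta * g) * (w * expR w) / g.
    by field; rewrite gt_eqF.
  rewrite kz /z.
  have -> : - (expR 1 * beta * g) * ((eta - g) / (expR 1 * beta * g)) / g - 1 + eta / g = 0.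
    by field; rewrite !lt0r_neq0.
  by rewrite mul0r.
have g2' : eta / d2 < g by rewrite ltNge g2.
have Ti : 0 < tau^-1 by rewrite invr_gt0.
split; first by rewrite mulfV ?gt_eqF // lexx /= ler_pdivlMr // mul1r ltW.
move=> l l1 l2; apply: comb => //; first exact: lpos.
rewrite invrK; apply: mulr_le0; last first.
  by rewrite subr_le0 -(ler_pM2l ta) mulfV ?gt_eqF.
have [e0|e0] := leP eta 0.
  rewrite mul0r addr0 /d2; lra.
move: g2'; rewrite ltr_pdivrMr // => g2'.
have : eta / g < d2 by rewrite ltr_pdivrMr // mulrC.
rewrite /d2; lra.
Qed.


Lemma lam_opt_nd (theta beta tau T eta : R) :
  0 < theta -> 0 < beta -> 0 < tau -> tau < T ->
  beta * expR (theta * tau) * (1 - theta * tau) < 1 -> 0 < eta ->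
  nondecreasing_fun (lam_opt eta theta beta tau T).
Proof.
move=> th b0 ta tT hyp e0.
have T0 : 0 < T by lra.
have hd := @h_dec theta tau T th ta tT.
have d10 : 0 < 1 - beta * expR (theta * T) * (1 - theta * T).
  have := ltr_pM2l b0; move=> h; nra.
have neg g : g <= 0 -> lam_opt eta theta beta tau T g = T^-1.
  move=> g0; rewrite /lam_opt /gamma_th ifT //.
  by apply: (le_lt_trans g0); rewrite divr_gt0.
move=> g1 g2 g12.
have [g10|g10] := leP g1 0.
  rewrite (neg _ g10).
  have [g20|g20] := leP g2 0; first by rewrite (neg _ g20).
  have [[_ h] _] := @pointwise theta beta tau T eta g2 th b0 ta tT hyp g20.
  by rewrite -(ler_pM2l T0) mulfV ?gt_eqF.
have g20 : 0 < g2 by lra.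
have [e|ne] := eqVneq g1 g2; first by rewrite e.
have lt12 : g1 < g2 by rewrite lt_neqAle ne.
have [[a1 a2] P1] := @pointwise theta beta tau T eta g1 th b0 ta tT hyp g10.
have [[b1 b2] P2] := @pointwise theta beta tau T eta g2 th b0 ta tT hyp g20.
have := P1 _ b1 b2; have := P2 _ a1 a2.
rewrite (max_idPl (ltW e0)).
set l1 := lam_opt _ _ _ _ _ g1; set l2 := lam_opt _ _ _ _ _ g2.
set A1 := l1 * _; set A2 := l2 * _.
move=> h2 h1.
have uv : g2^-1 < g1^-1 by rewrite ltf_pV2 // ?posrE.
rewrite leNgt; apply/negP => l21.
have : 0 < eta * ((l1 - l2) * (g1^-1 - g2^-1)) by rewrite !mulr_gt0 // subr_gt0.
move: h1 h2; rewrite /A1 /A2 /l1 /l2 => h1 h2.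
rewrite !mulrBr !mulrBl.
lra.
Qed.


Lemma measurable_invR : measurable_fun [set: R] (fun x : R => x^-1).
Proof.
have -> : (fun x : R => x^-1) = fun x => if 0 < x then expR (- ln x)
    else if x < 0 then - expR (- ln (- x)) else 0.
  apply/funext => x; case: ltgtP => x0.
  - by rewrite expRN lnK // posrE.
  - by rewrite expRN lnK ?posrE ?oppr_gt0 // invrN opprK.
  - by rewrite -x0 invr0.
apply: measurable_fun_ifT.
- by apply: measurable_realfun.measurable_fun_ltr; [exact: measurable_cst | exact: measurable_id].
- apply: measurableT_comp; first exact: measurable_realfun.measurable_expR.
  by apply: measurableT_comp => //; exact: measurable_realfun.measurable_ln.
apply: measurable_fun_ifT.
- by apply: measurable_realfun.measurable_fun_ltr; [exact: measurable_id | exact: measurable_cst].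
- apply: measurableT_comp => //; apply: measurableT_comp; first exact: measurable_realfun.measurable_expR.
  apply: measurableT_comp => //; apply: measurableT_comp; first exact: measurable_realfun.measurable_ln.
  by [].
exact: measurable_cst.
Qed.


Lemma lam_opt_meas (theta beta tau T eta : R) :
  0 < theta -> 0 < beta -> 0 < tau -> tau < T ->
  beta * expR (theta * tau) * (1 - theta * tau) < 1 ->
  measurable_fun [set: R] (lam_opt eta theta beta tau T).
Proof.
move=> th b0 ta tT hyp.
have [e0|e0] := ltP 0 eta.
  by apply: measurable_realfun.nondecreasing_measurable => //; exact: lam_opt_nd.
have hd := @h_dec theta tau T th ta tT.
set d1 := 1 - beta * expR (theta * T) * (1 - theta * T).
set d2 := 1 - beta * expR (theta * tau) * (1 - theta * tau).
have d20 : 0 < d2 by rewrite /d2; lra.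
have d12 : d2 < d1 by rewrite /d1 /d2; have := ltr_pM2l b0; move=> h; nra.
have d10 : 0 < d1 by lra.
set c := theta / (1 + LambertW ((eta - 0) / (expR 1 * beta * 0))).
have -> : lam_opt eta theta beta tau T = fun g =>
    if g < eta / d1 then T^-1 else if g <= eta / d2 then c else tau^-1.
  apply/funext => g; rewrite /lam_opt /gamma_th -/d1 -/d2.
  case: ifP => // g1; case: ifP => // g2.
  have h1 : eta <= g * d1 by rewrite -ler_pdivrMr // leNgt g1.
  have h2 : g * d2 <= eta by rewrite -ler_pdivlMr.
  have g0 : g = 0.
    apply/eqP; rewrite eq_le; apply/andP; split.
      by apply: (le_trans g2); rewrite ler_pdivrMr // mul0r.
    have : 0 <= g * (d1 - d2) by rewrite mulrBr; lra.
    by rewrite pmulr_lge0 // subr_gt0.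
  by rewrite g0.
apply: measurable_fun_ifT.
- by apply: measurable_realfun.measurable_fun_ltr; [exact: measurable_id | exact: measurable_cst].
- exact: measurable_cst.
apply: measurable_fun_ifT.
- by apply: measurable_realfun.measurable_fun_ler; [exact: measurable_id | exact: measurable_cst].
- exact: measurable_cst.
exact: measurable_cst.
Qed.


Notation D := ([set x : R | 0 < x] : set (measurableTypeR R)).
Lemma mD : measurable D.
Proof. rewrite -set_itvoy; exact: measurable_itv. Qed.

Lemma meas_lamexp (theta beta : R) (lam : R -> R) : measurable_fun [set: R] lam ->
  measurable_fun D (fun g => lam g * (beta * expR (theta / lam g) - 1)).
Proof.
move=> ml.
have mlD : measurable_fun D lam by exact: measurable_funS ml.
apply: measurable_realfun.measurable_funM => //.
apply: measurable_realfun.measurable_funB; last exact: measurable_cst.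
apply: measurable_realfun.measurable_funM; first exact: measurable_cst.
apply: (@measurableT_comp _ _ _ _ _ _ expR _ (fun x => theta / lam x)); first exact: measurable_realfun.measurable_expR.
apply: measurable_realfun.measurable_funM; first exact: measurable_cst.
exact: (measurableT_comp measurable_invR).
Qed.

Lemma intA (f lam : R -> R) (theta beta tau T : R) :
  0 < theta -> 0 < beta -> 0 < tau -> tau < T ->
  measurable_fun [set: R] f -> (forall x, 0 <= f x) ->
  (@lebesgue_measure R).-integrable D (fun x => (f x)%:E) ->
  measurable_fun [set: R] lam -> (forall g, 0 < g -> tau * lam g <= 1 /\ 1 <= T * lam g) ->
  (@lebesgue_measure R).-integrable D
     (fun g => (lam g * (beta * expR (theta / lam g) - 1) * f g)%:E).
Proof.
move=> th b0 ta tT mf f0 fi ml hl.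
have T0 : 0 < T by lra.
set C := tau^-1 * (beta * expR (theta * T) + 1).
apply: (@le_integrable _ _ _ _ _ mD _ (fun x => (C%:E * (f x)%:E)%E)).
- apply/measurable_realfun.measurable_EFinP; apply: measurable_realfun.measurable_funM; first exact: meas_lamexp.
  exact: measurable_funS mf.
- move=> g Dg /=; rewrite lee_fin.
  have [l1 l2] := hl g Dg.
  have lp : 0 < lam g.
    rewrite ltNge; apply/negP => l0; have : T * lam g <= 0 by rewrite mulr_ge0_le0 // ltW.
    lra.
  have lt : lam g <= tau^-1 by rewrite -(ler_pM2l ta) mulfV ?gt_eqF.
  have ti : 0 < tau^-1 by rewrite invr_gt0.
  have tl : theta / lam g <= theta * T.
    by rewrite ler_pdivrMr // -mulrA ler_peMr // ?ltW // mulrC.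
  have E : expR (theta / lam g) <= expR (theta * T) by rewrite ler_expR.
  have E0 := expR_gt0 (theta / lam g).
  have ET := expR_gt0 (theta * T).
  have C0 : 0 <= C by rewrite /C mulr_ge0 // ?addr_ge0 ?mulr_ge0 // ltW.
  have key : `|lam g * (beta * expR (theta / lam g) - 1)| <= C.
    have h1 : 0 <= lam g * (beta * expR (theta / lam g)) by rewrite !mulr_ge0 // ltW.
    have h2 : lam g * (beta * expR (theta / lam g)) <= tau^-1 * (beta * expR (theta * T)).
      apply: ler_pM; [exact: ltW | by rewrite mulr_ge0 // ltW | exact: lt | by rewrite ler_wpM2l // ltW].
    have h3 : 0 <= tau^-1 * (beta * expR (theta * T)) by rewrite !mulr_ge0 // ltW.
    rewrite ler_norml /C; apply/andP; split; lra.
  rewrite normrM [X in _ <= X]normrM (ger0_norm (f0 g)) (ger0_norm C0).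
  by rewrite ler_wpM2r.
- exact: (integrableZl mD).
Qed.


Lemma intB (f lam : R -> R) (T Pt : R) : 0 < T ->
  measurable_fun [set: R] f -> (forall x, 0 <= f x) ->
  measurable_fun [set: R] lam -> (forall g, 0 < g -> 1 <= T * lam g) ->
  (\int[@lebesgue_measure R]_(x in D) (lam x / x * f x)%:E <= Pt%:E)%E ->
  (@lebesgue_measure R).-integrable D (fun x => (lam x / x * f x)%:E).
Proof.
move=> T0 mf f0 ml hl hP.
apply/integrableP; split.
  apply/measurable_realfun.measurable_EFinP.
  apply: measurable_realfun.measurable_funM; last exact: measurable_funS mf.
  apply: measurable_realfun.measurable_funM; first exact: measurable_funS ml.
  exact: measurable_funS measurable_invR.
apply: le_lt_trans (le_lt_trans hP (ltry _)).
rewrite le_eqVlt; apply/orP; left; apply/eqP.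
apply: eq_integral => x; rewrite inE /= => x0.
have lp : 0 < lam x.
  rewrite ltNge; apply/negP => l0; have : T * lam x <= 0 by rewrite mulr_ge0_le0 // ltW.
  have := hl x x0; lra.
by rewrite ger0_norm // !mulr_ge0 // ltW // invr_gt0.
Qed.

Lemma intf (f : R -> R) : is_pdf f ->
  (@lebesgue_measure R).-integrable D (fun x => (f x)%:E).
Proof.
move=> [mf [f0 [_ f1]]].
apply: (integrableS measurableT mD (@subsetT _ _)).
apply/integrableP; split.
  by apply/measurable_realfun.measurable_EFinP; exact: mf.
under eq_integral => x _ do rewrite /= ger0_norm //.
by rewrite f1 ltry.
Qed.

Lemma ehelp (a0 a b0 b : \bar R) (mu : R) : a0 \is a fin_num -> a \is a fin_num ->
  b0 \is a fin_num -> b \is a fin_num -> 0 <= mu ->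
  (a0 + mu%:E * b0 <= a + mu%:E * b)%E -> (b <= b0)%E -> (a0 <= a)%E.
Proof.
move=> /fineK <- /fineK <- /fineK <- /fineK <- mu0.
rewrite -!EFinM -!EFinD !lee_fin => h1 h2.
have := ler_wpM2l mu0 h2; lra.
Qed.

End Alg.

Notation Dp R := ([set x : R | (0 < x)%R] : set (measurableTypeR R)).

Theorem theorem1 (R : realType) (f : R -> R) (theta beta Pt tau T eta : R) :
  is_pdf f ->
  0 < theta -> 0 < beta -> 0 < Pt -> 0 < tau -> tau < T ->
  beta * expR (theta * tau) * (1 - theta * tau) < 1 ->
  expect f (fun g => lam_opt eta theta beta tau T g / g) = Pt%:E ->
  feasible_P3 f Pt tau T (lam_opt eta theta beta tau T) /\
  (forall lam : R -> R, feasible_P3 f Pt tau T lam ->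
     (obj_P3 f theta beta (lam_opt eta theta beta tau T) <= obj_P3 f theta beta lam)%E).
Proof.
move=> pdf th b0 Pt0 ta tT hyp Heq.
have [mf [f0 _]] := pdf.
have fi := @intf R f pdf.
have T0 : 0 < T by lra.
have ml0 := @lam_opt_meas R theta beta tau T eta th b0 ta tT hyp.
have pw g (gp : 0 < g) := @pointwise R theta beta tau T eta g th b0 ta tT hyp gp.
have mD' := @mD R.
split.
  split; first exact: ml0.
  split; first by move=> g gp; exact: (pw g gp).1.
  by rewrite Heq.
move=> lam [ml [hl hP]].
set mu := Num.max eta 0.
have mu0 : 0 <= mu by rewrite /mu le_max lexx orbT.
have iA0 := @intA R f _ theta beta tau T th b0 ta tT mf f0 fi ml0 (fun g gp => (pw g gp).1).
have iA := @intA R f lam theta beta tau T th b0 ta tT mf f0 fi ml hl.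
have hP0 : (expect f (fun g => (lam_opt eta theta beta tau T g / g)%R) <= Pt%:E)%E by rewrite Heq.
have iB0 := @intB R f _ T Pt T0 mf f0 ml0 (fun g gp => (pw g gp).1.2) hP0.
have iB := @intB R f lam T Pt T0 mf f0 ml (fun g gp => (hl g gp).2) hP.
set l0 := lam_opt eta theta beta tau T in iA0 iB0 hP0 pw *.
have key : (\int[@lebesgue_measure R]_(x in Dp R)
     ((l0 x * (beta * expR (theta / l0 x) - 1) * f x)%:E + mu%:E * (l0 x / x * f x)%:E) <=
   \int[@lebesgue_measure R]_(x in Dp R)
     ((lam x * (beta * expR (theta / lam x) - 1) * f x)%:E + mu%:E * (lam x / x * f x)%:E))%E.
  apply: le_integral.
  - exact: mD'.
  - exact: (integrableD mD' iA0 (integrableZl mD' mu iB0)).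
  - exact: (integrableD mD' iA (integrableZl mD' mu iB)).
  move=> x; rewrite inE /= => xp.
  rewrite -!EFinM -!EFinD lee_fin.
  have [l1 l2] := hl x xp.
  have h := ler_wpM2r (f0 x) ((pw x xp).2 (lam x) l1 l2).
  rewrite !mulrDl -/mu in h; rewrite !mulrA; lra.
rewrite !integralD // in key; try exact: (integrableZl mD').
rewrite !integralZl // in key.
rewrite /obj_P3 /expect.
apply: (@ehelp R _ _ _ _ mu (integrable_fin_num mD' iA0) (integrable_fin_num mD' iA)
  (integrable_fin_num mD' iB0) (integrable_fin_num mD' iB) mu0 key).
apply: (le_trans hP); rewrite -Heq; exact: lexx.
Qed.
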